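(* Let $n_y,n_z$ be odd positive integers with $2,n_y,n_z$ pairwise relatively prime, and let $K$ and $K'$ be Lissajous knots with frequencies $(2,n_y,n_z)$, $\phi_x=0$, and phase shift pairs $(\phi_y,\phi_z)$ and $(\phi_y',\phi_z')$ respectively. If $(\phi_y,\phi_z)$ and $(\phi_y',\phi_z')$ are symmetric with respect to the point $(\pi/4,\pi/4)$ or with respect to the point $(\pi/4,3\pi/4)$, then $K$ and $K'$ are equivalent (as knots, up to mirror image).
   Context: A Lissajous knot with frequencies $(n_x,n_y,n_z)$ and phase shifts $(\phi_x,\phi_y,\phi_z)$ is the curve $K(t)=(\cos(n_xt+\phi_x),\cos(n_yt+\phi_y),\cos(n_zt+\phi_z))$, $0\le t\le 2\pi$, when it is embedded. Knots and their mirror images are regarded as equivalent. Two points are symmetric with respect to a point $P$ if $P$ is their midpoint. *)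

(* Defs.v *)
From Stdlib Require Import Reals Lra Lia ZArith Znumtheory.
Open Scope R_scope.

Definition P3 := (R * R * R)%type.

(* Max-distance on R^3 (induces the Euclidean topology). *)
Definition dist3 (p q : P3) : R :=
  let '(x1, y1, z1) := p in let '(x2, y2, z2) := q in
  Rmax (Rabs (x1 - x2)) (Rmax (Rabs (y1 - y2)) (Rabs (z1 - z2))).

Definition cont3 (f : P3 -> P3) : Prop :=
  forall p eps, 0 < eps -> exists delta, 0 < delta /\
    forall q, dist3 p q < delta -> dist3 (f p) (f q) < eps.

Definition homeo3 (f : P3 -> P3) : Prop :=
  exists g : P3 -> P3, cont3 f /\ cont3 g /\
    (forall p, g (f p) = p) /\ (forall p, f (g p) = p).

Definition ambient_isotopy (H : R -> P3 -> P3) : Prop :=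
  (forall t p eps, 0 <= t <= 1 -> 0 < eps -> exists delta, 0 < delta /\
     forall s q, 0 <= s <= 1 -> Rabs (t - s) < delta -> dist3 p q < delta ->
       dist3 (H t p) (H s q) < eps) /\
  (forall t, 0 <= t <= 1 -> homeo3 (H t)) /\
  (forall p, H 0 p = p).

Definition image_curve (c : R -> P3) (p : P3) : Prop :=
  exists t, 0 <= t <= 2 * PI /\ c t = p.

Definition isotopic_sets (A B : P3 -> Prop) : Prop :=
  exists H, ambient_isotopy H /\
    (forall p, A p -> B (H 1 p)) /\ (forall q, B q -> exists p, A p /\ H 1 p = q).

Definition mirror (p : P3) : P3 := let '(x, y, z) := p in (x, y, - z).

Definition knot_equiv (c c' : R -> P3) : Prop :=
  isotopic_sets (image_curve c) (image_curve c') \/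
  isotopic_sets (image_curve c) (image_curve (fun t => mirror (c' t))).

Definition lissajous (nx ny nz : nat) (px py pz : R) (t : R) : P3 :=
  (cos (INR nx * t + px), cos (INR ny * t + py), cos (INR nz * t + pz)).

Definition embedded (c : R -> P3) : Prop :=
  forall s t, 0 <= s < 2 * PI -> 0 <= t < 2 * PI -> c s = c t -> s = t.

(* Main.v *)
Require Import Defs.
From Stdlib Require Import Reals Lra Lia ZArith Znumtheory.
Open Scope R_scope.

Lemma Rabs_sin_le x : Rabs (sin x) <= Rabs x.
Proof.
 assert (H: forall y, 0 < y -> Rabs (sin y) <= y).
 { intros y Hy. apply Rabs_le. split.
   - destruct (Rle_lt_dec 1 y). { pose proof (SIN_bound y); lra. }
     assert (0 <= sin y) by (apply sin_ge_0; pose proof PI2_1; lra). lra.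
   - left; apply sin_lt_x; auto. }
 destruct (Rtotal_order x 0) as [Hx|[Hx|Hx]].
 - rewrite <- Rabs_Ropp, <- sin_neg, <- (Rabs_Ropp x).
   rewrite (Rabs_right (-x)) by lra. apply H; lra.
 - subst; rewrite sin_0, Rabs_R0; lra.
 - rewrite (Rabs_right x) by lra; apply H; auto.
Qed.

Lemma abs_le1_sin x : Rabs (sin x) <= 1.
Proof. apply Rabs_le; pose proof (SIN_bound x); lra. Qed.
Lemma abs_le1_cos x : Rabs (cos x) <= 1.
Proof. apply Rabs_le; pose proof (COS_bound x); lra. Qed.

Lemma half_abs u : Rabs (u / 2) = Rabs u / 2.
Proof. unfold Rdiv; rewrite Rabs_mult, (Rabs_right (/2)); lra. Qed.

Lemma cos_lip u v : Rabs (cos u - cos v) <= Rabs (u - v).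
Proof.
 rewrite form2, !Rabs_mult, (Rabs_left (-2)) by lra.
 pose proof (Rabs_sin_le ((u - v)/2)). rewrite half_abs in H.
 pose proof (abs_le1_sin ((u+v)/2)).
 pose proof (Rabs_pos (sin ((u - v) / 2))). pose proof (Rabs_pos (sin ((u + v) / 2))).
 nra.
Qed.

Lemma sin_lip u v : Rabs (sin u - sin v) <= Rabs (u - v).
Proof.
 rewrite form4, !Rabs_mult, (Rabs_right 2) by lra.
 pose proof (Rabs_sin_le ((u - v)/2)). rewrite half_abs in H.
 pose proof (abs_le1_cos ((u+v)/2)).
 pose proof (Rabs_pos (sin ((u - v) / 2))). pose proof (Rabs_pos (cos ((u + v) / 2))).
 nra.
Qed.

Lemma abs_bnd w b : Rabs w <= b -> -b <= w <= b.
Proof. unfold Rabs; destruct Rcase_abs; lra. Qed.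

Lemma comb_bound a1 a2 b1 b2 x x' y y' k d :
  Rabs (a1 - b1) <= k -> Rabs (a2 - b2) <= k -> Rabs b1 <= 1 -> Rabs b2 <= 1 ->
  Rabs (x - x') < d -> Rabs (y - y') < d ->
  Rabs ((a1 * x + a2 * y) - (b1 * x' + b2 * y')) < k * (Rabs x + Rabs y) + 2 * d.
Proof.
 intros H1 H2 H3 H4 H5 H6.
 replace ((a1 * x + a2 * y) - (b1 * x' + b2 * y'))
   with ((a1 - b1) * x + b1 * (x - x') + ((a2 - b2) * y + b2 * (y - y'))) by ring.
 assert (E1: Rabs ((a1 - b1) * x) <= k * Rabs x).
 { rewrite Rabs_mult; apply Rmult_le_compat_r; auto; apply Rabs_pos. }
 assert (E2: Rabs (b1 * (x - x')) <= d).
 { rewrite Rabs_mult. pose proof (Rabs_pos b1). pose proof (Rabs_pos (x - x')). nra. }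
 assert (E3: Rabs ((a2 - b2) * y) <= k * Rabs y).
 { rewrite Rabs_mult; apply Rmult_le_compat_r; auto; apply Rabs_pos. }
 assert (E4: Rabs (b2 * (y - y')) < d).
 { rewrite Rabs_mult. pose proof (Rabs_pos b2). pose proof (Rabs_pos (y - y')). nra. }
 apply abs_bnd in E1; apply abs_bnd in E2; apply abs_bnd in E3.
 assert (E4': -d < b2 * (y - y') < d).
 { unfold Rabs in E4; destruct Rcase_abs in E4; lra. }
 apply Rabs_def1; lra.
Qed.

Definition rot (a t : R) (p : P3) : P3 :=
  let '(x, y, z) := p in
  (cos (a * t) * x - sin (a * t) * y, sin (a * t) * x + cos (a * t) * y, z).

Lemma rot_cont a t p eps : 0 < eps -> exists delta, 0 < delta /\
  forall s q, Rabs (t - s) < delta -> dist3 p q < delta ->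
    dist3 (rot a t p) (rot a s q) < eps.
Proof.
 intros Heps. destruct p as [[x y] z].
 set (M := Rabs a * (Rabs x + Rabs y) + 2).
 assert (HM: 2 <= M).
 { unfold M. pose proof (Rabs_pos a). pose proof (Rabs_pos x). pose proof (Rabs_pos y). nra. }
 exists (eps / (M + 1)).
 assert (Hd: eps / (M + 1) * (M + 1) = eps) by (field; lra).
 assert (Hdp: 0 < eps / (M + 1)) by (apply Rdiv_lt_0_compat; lra).
 split; auto.
 set (d := eps / (M + 1)) in *.
 intros s [[x' y'] z'] Hts Hq. unfold dist3, rot in *.
 apply Rmax_Rlt in Hq as [Hx Hq]; apply Rmax_Rlt in Hq as [Hy Hz].
 assert (Hk: Rabs (a * t - a * s) <= Rabs a * d).
 { replace (a * t - a * s) with (a * (t - s)) by ring. rewrite Rabs_mult.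
   apply Rmult_le_compat_l; [apply Rabs_pos | lra]. }
 assert (Hfin: Rabs a * d * (Rabs x + Rabs y) + 2 * d < eps).
 { assert (Rabs a * d * (Rabs x + Rabs y) + 2 * d = M * d) by (unfold M; ring). nra. }
 apply Rmax_lub_lt; [|apply Rmax_lub_lt].
 - replace (cos (a * t) * x - sin (a * t) * y - (cos (a * s) * x' - sin (a * s) * y'))
     with ((cos (a * t) * x + (- sin (a * t)) * y) - (cos (a * s) * x' + (- sin (a * s)) * y')) by ring.
   eapply Rlt_trans; [|apply Hfin]. apply comb_bound; auto.
   + eapply Rle_trans; [apply cos_lip|]; auto.
   + replace (- sin (a * t) - - sin (a * s)) with (-(sin (a * t) - sin (a * s))) by ring.
     rewrite Rabs_Ropp. eapply Rle_trans; [apply sin_lip|]; auto.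
   + apply abs_le1_cos.
   + rewrite Rabs_Ropp; apply abs_le1_sin.
 - eapply Rlt_trans; [|apply Hfin]. apply comb_bound; auto.
   + eapply Rle_trans; [apply sin_lip|]; auto.
   + eapply Rle_trans; [apply cos_lip|]; auto.
   + apply abs_le1_sin.
   + apply abs_le1_cos.
 - nra.
Qed.

Lemma rot_inv a t p : rot (- a) t (rot a t p) = p.
Proof.
 destruct p as [[x y] z]. unfold rot.
 replace (- a * t) with (- (a * t)) by ring. rewrite cos_neg, sin_neg.
 pose proof (sin2_cos2 (a * t)) as Hsc. unfold Rsqr in Hsc.
 set (c := cos (a * t)) in *. set (s := sin (a * t)) in *.
 assert (E1: c * (c * x - s * y) - - s * (s * x + c * y) = x).
 { transitivity ((s * s + c * c) * x); [ring | rewrite Hsc; ring]. }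
 assert (E2: - s * (c * x - s * y) + c * (s * x + c * y) = y).
 { transitivity ((s * s + c * c) * y); [ring | rewrite Hsc; ring]. }
 rewrite E1, E2; reflexivity.
Qed.

Lemma cont3_rot a t : cont3 (rot a t).
Proof.
 intros p eps Heps. destruct (rot_cont a t p eps Heps) as [d [Hd H]].
 exists d; split; auto. intros q Hq. apply H; auto.
 replace (t - t) with 0 by ring; rewrite Rabs_R0; auto.
Qed.

Lemma rot_iso : ambient_isotopy (rot PI).
Proof.
 split; [|split].
 - intros t p eps _ Heps. destruct (rot_cont PI t p eps Heps) as [d [Hd H]].
   exists d; split; auto.
 - intros t _. exists (rot (- PI) t). split; [apply cont3_rot|]. split; [apply cont3_rot|].
   split; intros p. apply rot_inv.
   pose proof (rot_inv (- PI) t p). rewrite Ropp_involutive in H. exact H.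
 - intros [[x y] z]. unfold rot. rewrite Rmult_0_r, cos_0, sin_0. repeat rewrite Rmult_1_l, Rmult_0_l. rewrite Rminus_0_r, Rplus_0_l; reflexivity.
Qed.

Definition D0 (p : P3) : P3 := let '(x, y, z) := p in (- x, - y, z).

Lemma rot1 p : rot PI 1 p = D0 p.
Proof.
 destruct p as [[x y] z]. unfold rot, D0. rewrite Rmult_1_r, cos_PI, sin_PI.
 repeat rewrite Rmult_0_l. rewrite Rminus_0_r, Rplus_0_l. f_equal; try f_equal; ring.
Qed.

Lemma iso_lemma (K K2 : R -> P3) c :
  (forall t, K (t + 2 * PI) = K t) -> (forall t, K2 (t + 2 * PI) = K2 t) ->
  0 <= c <= 2 * PI -> (forall s, K2 s = D0 (K (c - s))) ->
  isotopic_sets (image_curve K) (image_curve K2).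
Proof.
 intros HK HK2 Hc HD. exists (rot PI). split; [apply rot_iso|]. split.
 - intros p [t [Ht <-]]. rewrite rot1.
   destruct (Rle_lt_dec 0 (c - t)).
   + exists (c - t); split; [lra|]. rewrite HD. f_equal; f_equal; ring.
   + exists (c - t + 2 * PI); split; [lra|]. rewrite HK2, HD. f_equal; f_equal; ring.
 - intros q [s [Hs <-]].
   destruct (Rle_lt_dec 0 (c - s)).
   + exists (K (c - s)); split; [exists (c - s); split; [lra|reflexivity]|].
     rewrite rot1, HD; reflexivity.
   + exists (K (c - s + 2 * PI)); split; [exists (c - s + 2 * PI); split; [lra|reflexivity]|].
     rewrite rot1, HD, HK; reflexivity.
Qed.

Definition p1 (p : P3) : R := fst (fst p).
Definition p2 (p : P3) : R := snd (fst p).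
Definition p3 (p : P3) : R := snd p.

Lemma final (K K' : R -> P3) c sg :
  (forall t, K (t + 2 * PI) = K t) -> (forall t, K' (t + 2 * PI) = K' t) ->
  0 <= c <= 2 * PI -> (sg = 1 \/ sg = -1) ->
  (forall s, p1 (K' s) = - p1 (K (c - s)) /\ p2 (K' s) = - p2 (K (c - s)) /\
             p3 (K (c - s)) = sg * p3 (K' s)) ->
  knot_equiv K K'.
Proof.
 intros HK HK' Hc Hsg H. destruct Hsg as [->| ->].
 - left. apply (iso_lemma K K' c HK HK' Hc).
   intros s. specialize (H s). unfold p1, p2, p3 in H.
   destruct (K' s) as [[x' y'] z']; destruct (K (c - s)) as [[x y] z]; simpl in *.
   destruct H as [A [B C]]. subst. f_equal; try f_equal; ring.
 - right. apply (iso_lemma K _ c HK); auto.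
   + intros t; rewrite HK'; reflexivity.
   + intros s. specialize (H s). unfold p1, p2, p3 in H.
     destruct (K' s) as [[x' y'] z']; destruct (K (c - s)) as [[x y] z]; simpl in *.
     destruct H as [A [B C]]. subst. f_equal; try f_equal; ring.
Qed.

Lemma cos_kPI k u : cos (u + INR k * PI) = (-1) ^ k * cos u.
Proof.
 induction k as [|k IH].
 - simpl. rewrite Rmult_0_l, Rplus_0_r; ring.
 - rewrite S_INR. replace (u + (INR k + 1) * PI) with ((u + INR k * PI) + PI) by ring.
   rewrite neg_cos, IH. simpl; ring.
Qed.

Lemma pow_m1 k : (-1) ^ k = 1 \/ (-1) ^ k = -1.
Proof. induction k as [|k IH]; simpl; [left; ring|]. destruct IH as [-> | ->]; [right|left]; ring. Qed.

Lemma liss_per n1 n2 n3 q1 q2 q3 t :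
  lissajous n1 n2 n3 q1 q2 q3 (t + 2 * PI) = lissajous n1 n2 n3 q1 q2 q3 t.
Proof.
 unfold lissajous.
 assert (E: forall n q, cos (INR n * (t + 2 * PI) + q) = cos (INR n * t + q)).
 { intros n q. replace (INR n * (t + 2 * PI) + q) with ((INR n * t + q) + INR (2 * n) * PI)
     by (rewrite mult_INR; simpl; ring).
   rewrite cos_kPI, pow_1_even; ring. }
 rewrite !E; reflexivity.
Qed.

Lemma core (ny nz a b j e m : nat) (py pz py' pz' : R) :
  INR ny = 2 * INR a + 1 -> INR nz = 2 * INR b + 1 -> (j <= 1)%nat ->
  (a + j * ny = 2 * m)%nat ->
  py' = PI / 2 - py -> pz' = PI / 2 - pz + INR e * PI ->
  knot_equiv (lissajous 2 ny nz 0 py pz) (lissajous 2 ny nz 0 py' pz').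
Proof.
 intros Hny Hnz Hj Hk Hpy Hpz.
 assert (I2: INR 2 = 2) by (simpl; ring).
 apply (final _ _ (PI / 2 + INR j * PI) (- (-1) ^ (b + j * nz) * (-1) ^ e)).
 - intros; apply liss_per.
 - intros; apply liss_per.
 - assert (INR j <= 1) by (apply le_INR in Hj; simpl in Hj; lra).
   pose proof (pos_INR j). pose proof PI2_RGT_0. nra.
 - destruct (pow_m1 (b + j * nz)) as [-> | ->]; destruct (pow_m1 e) as [-> | ->];
   [right|left|left|right]; ring.
 - intros s. unfold lissajous, p1, p2, p3; cbn [fst snd]. split; [|split].
   + replace (INR 2 * (PI / 2 + INR j * PI - s) + 0) with
       (- (INR 2 * s + 0) + INR (S (2 * j)) * PI)
       by (rewrite I2, S_INR, mult_INR, I2; field).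
     rewrite cos_kPI, cos_neg, pow_1_odd; ring.
   + replace (INR ny * (PI / 2 + INR j * PI - s) + py) with
       ((PI / 2 + (py - INR ny * s)) + INR (a + j * ny) * PI)
       by (rewrite plus_INR, mult_INR, Hny; field).
     rewrite cos_kPI, Hk, pow_1_even, Hpy.
     replace (INR ny * s + (PI / 2 - py)) with (PI / 2 - (py - INR ny * s)) by ring.
     rewrite cos_shift. pose proof (sin_cos (py - INR ny * s)). lra.
   + replace (INR nz * (PI / 2 + INR j * PI - s) + pz) with
       ((PI / 2 + (pz - INR nz * s)) + INR (b + j * nz) * PI)
       by (rewrite plus_INR, mult_INR, Hnz; field).
     rewrite cos_kPI, Hpz.
     replace (INR nz * s + (PI / 2 - pz + INR e * PI)) with
       ((PI / 2 - (pz - INR nz * s)) + INR e * PI) by ring.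
     rewrite cos_kPI, cos_shift. pose proof (sin_cos (pz - INR nz * s)) as Hc.
     assert (Hc': cos (PI / 2 + (pz - INR nz * s)) = - sin (pz - INR nz * s)) by lra.
     rewrite Hc'.
     destruct (pow_m1 e) as [-> | ->]; ring.
Qed.

Theorem proposition2 (ny nz : nat) (py pz py' pz' : R) :
  (0 < ny)%nat -> (0 < nz)%nat -> Nat.odd ny = true -> Nat.odd nz = true ->
  Nat.gcd 2 ny = 1%nat -> Nat.gcd 2 nz = 1%nat -> Nat.gcd ny nz = 1%nat ->
  embedded (lissajous 2 ny nz 0 py pz) ->
  embedded (lissajous 2 ny nz 0 py' pz') ->
  ((py + py') / 2 = PI / 4 /\ (pz + pz') / 2 = PI / 4) \/
  ((py + py') / 2 = PI / 4 /\ (pz + pz') / 2 = 3 * PI / 4) ->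
  knot_equiv (lissajous 2 ny nz 0 py pz) (lissajous 2 ny nz 0 py' pz').
Proof.
 intros _ _ Hoy Hoz _ _ _ _ _ Hsym.
 apply Nat.odd_spec in Hoy as [a Ha]. apply Nat.odd_spec in Hoz as [b Hb].
 assert (Hny: INR ny = 2 * INR a + 1) by (rewrite Ha, plus_INR, mult_INR; simpl; ring).
 assert (Hnz: INR nz = 2 * INR b + 1) by (rewrite Hb, plus_INR, mult_INR; simpl; ring).
 assert (Hpy: py' = PI / 2 - py) by (destruct Hsym as [[H _]|[H _]]; lra).
 assert (Hpz: exists e, pz' = PI / 2 - pz + INR e * PI).
 { destruct Hsym as [[_ H]|[_ H]]; [exists 0%nat | exists 1%nat]; simpl; lra. }
 destruct Hpz as [e Hpz].
 destruct (Nat.Even_or_Odd a) as [[m Hm]|[m Hm]].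
 - apply (core ny nz a b 0 e m py pz py' pz'); auto; lia.
 - apply (core ny nz a b 1 e (3 * m + 2) py pz py' pz'); auto; lia.
Qed.
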